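(* Let $\sigma>0$ and let $\mu_1,\dots,\mu_n,\mu_1^*,\dots,\mu_n^*\in\mathbb{R}$. Let $X_1,\dots,X_n$ be independent random variables with $X_i\sim \mathrm{Gum}(\mu_i,\sigma)$, and let $Y_1,\dots,Y_n$ be independent random variables with $Y_i\sim \mathrm{Gum}(\mu_i^*,\sigma)$, $i=1,\dots,n$. Let $X_{n:n}=\max\{X_1,\dots,X_n\}$ and $Y_{n:n}=\max\{Y_1,\dots,Y_n\}$. If $\mu_i\geq \mu_i^*$ for all $i=1,\dots,n$, then $X_{n:n}\geq_{lr} Y_{n:n}$.
   Context: A random variable $X$ is said to have the Gumbel distribution $\mathrm{Gum}(\mu,\sigma)$ (location $\mu\in\mathbb{R}$, scale $\sigma>0$) if its cumulative distribution function is $F(x)=e^{-e^{-(x-\mu)/\sigma}}$, $x\in\mathbb{R}$. For continuous random variables $X,Y$ with densities $f_X,f_Y$, $X\leq_{lr}Y$ (likelihood ratio order) means that $f_Y(x)/f_X(x)$ is increasing in $x$; $X\geq_{lr}Y$ means $Y\leq_{lr}X$. *)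

(* Defs.v *)
From HB Require Import structures.
From mathcomp Require Import all_boot all_order all_algebra.
From mathcomp Require Import all_classical all_reals all_analysis.
Set Implicit Arguments. Unset Strict Implicit. Unset Printing Implicit Defensive.
Import Order.TTheory GRing.Theory Num.Theory.
Import numFieldNormedType.Exports.
Local Open Scope classical_set_scope.
Local Open Scope ring_scope.

(* Mutual independence of a finite family of real random variables:
   the joint law of (X_i)_i is the product of the marginals on measurable boxes
   (taking B_i = setT recovers every subfamily). *)
Definition mutually_independent {d} {T : measurableType d} {R : realType}
  (P : probability T R) (n : nat) (X : 'I_n -> T -> R) : Prop :=
  forall B : 'I_n -> set R, (forall i, measurable (B i)) ->
    P (\bigcap_i (X i @^-1` B i)) = (\prod_(i < n) P (X i @^-1` B i))%E.

Definition gumbel_cdf {R : realType} (mu sigma x : R) : R :=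
  expR (- expR (- ((x - mu) / sigma))).

Definition is_gumbel {d} {T : measurableType d} {R : realType}
  (P : probability T R) (X : T -> R) (mu sigma : R) : Prop :=
  forall x : R, P (X @^-1` `]-oo, x]) = (gumbel_cdf mu sigma x)%:E.

Definition is_density {d} {T : measurableType d} {R : realType}
  (P : probability T R) (Z : T -> R) (f : R -> R) : Prop :=
  measurable_fun setT f /\ (forall t, 0 <= f t) /\
  forall x : R, P (Z @^-1` `]-oo, x]) =
    (\int[lebesgue_measure]_(t in `]-oo, x]) (f t)%:E)%E.

Definition lr_le {d1 d2} {T1 : measurableType d1} {T2 : measurableType d2}
  {R : realType} (P1 : probability T1 R) (Z1 : T1 -> R)
  (P2 : probability T2 R) (Z2 : T2 -> R) : Prop :=
  exists f1 f2 : R -> R, is_density P1 Z1 f1 /\ is_density P2 Z2 f2 /\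
    (forall x y : R, x <= y -> f2 x / f1 x <= f2 y / f1 y).

Definition maxRV {T : Type} {R : realType} (n : nat) (hn : (0 < n)%N)
  (X : 'I_n -> T -> R) : T -> R :=
  fun t => \big[Num.max/X (Ordinal hn) t]_(i < n) X i t.

(* Main.v *)
Require Import Defs.
From HB Require Import structures.
From mathcomp Require Import all_boot all_order all_algebra.
From mathcomp Require Import all_classical all_reals all_analysis.
From mathcomp Require Import ring lra.
Import Order.TTheory GRing.Theory Num.Theory.
Import numFieldNormedType.Exports.
Local Open Scope classical_set_scope.
Local Open Scope ring_scope.

Section S.
Variable R : realType.
Variables (A s : R).
Hypothesis (hA : 0 < A) (hs : 0 < s).

Definition GA (x : R) : R := expR (- (A * expR (- (x / s)))).
Definition gA (x : R) : R := GA x * (A * expR (- (x / s)) / s).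
Definition FF (t : R) : R := - expR (- (A * expR (t / s))).

Lemma FF_der (t : R) : is_derive t (1:R) FF (expR (- (A * expR (t / s))) * (A * expR (t / s) / s)).
Proof.
rewrite /FF; apply: trigger_derive.
rewrite scaler0 add0r /GRing.scale/=.
by rewrite mulr1 mulrN opprK !mulrA.
Qed.

Lemma der_cont (f : R -> R) : (forall x, derivable f x 1) -> continuous f.
Proof. by move=> df x; apply/differentiable_continuous/derivable1_diffP. Qed.

Lemma gA_der x : derivable gA x 1.
Proof. rewrite /gA /GA. apply: ex_derive. Qed.

Lemma gA_cont : continuous gA.
Proof. apply: der_cont => x; exact: gA_der. Qed.

Lemma gA_ge0 x : 0 <= gA x.
Proof.
rewrite /gA /GA; apply: mulr_ge0; first exact: expR_ge0.
by apply: divr_ge0; [apply: mulr_ge0; [exact: ltW|exact: expR_ge0]|exact: ltW].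
Qed.

Lemma FF_cvg : FF x @[x --> +oo] --> 0.
Proof.
rewrite /FF -oppr0; apply: cvgN.
have h1 : (fun t => A * expR (t / s)) @ +oo --> +oo.
  apply/cvgryPge => M; near=> t.
  apply: (le_trans _ (ler_wpM2l (ltW hA) (expR_ge1Dx (t / s)))).
  by rewrite mulrDr mulr1 -lerBlDl mulrA ler_pdivlMr // -ler_pdivrMl //.

have h2 := cvg_comp _ _ h1 (@cvgr_expR R). exact: h2.
Unshelve. all: end_near. Qed.

Lemma gA_int x :
  (\int[lebesgue_measure]_(t in `]-oo, x]) (gA t)%:E = (GA x)%:E)%E.
Proof.
have := @ge0_integration_by_substitutionNy R gA (- x).
rewrite opprK => ->; last 2 first.
- exact/continuous_subspaceT/gA_cont.
- by move=> y _; exact: gA_ge0.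
rewrite (@ge0_continuous_FTC2y R (gA \o -%R) FF (- x) 0).
- by rewrite sub0e /FF -EFinN opprK /GA mulNr.
- by move=> y _; exact: gA_ge0.
- apply/continuous_subspaceT => y; apply: continuous_comp; first exact: continuousN.
  exact: gA_cont.
- exact: FF_cvg.

- by move=> y _; apply: ex_derive; apply: FF_der.
- apply: cvg_at_right_filter; apply: der_cont => y; apply: ex_derive; apply: FF_der.
- move=> y _; rewrite derive1E derive_val /= /gA /GA !mulNr !opprK.
  by rewrite scaler0 add0r /GRing.scale/= mulr1 mulrN opprK !mulrA.
Qed.
End S.
Arguments GA {R}. Arguments gA {R}. Arguments FF {R}. Arguments gA_cont {R}. Arguments gA_ge0 {R}. Arguments gA_int {R}.

Lemma max_cdf (R : realType) d (T : measurableType d) (P : probability T R) n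
  (hn : (0 < n)%N) (s : R) (mu : 'I_n -> R) (X : 'I_n -> T -> R)
  (hind : mutually_independent P X) (hX : forall i, is_gumbel P (X i) (mu i) s) x :
  P (maxRV hn X @^-1` `]-oo, x]) = (GA (\sum_i expR (mu i / s)) s x)%:E.
Proof.
have -> : maxRV hn X @^-1` `]-oo, x] = \bigcap_i (X i @^-1` `]-oo, x]).
  apply/seteqP; split => t /=.
  - rewrite in_itv /= /maxRV => /bigmax_leP [_ h] i _ /=.
    by rewrite in_itv /= h.
  - move=> h; rewrite in_itv/= /maxRV; apply/bigmax_leP; split.
    + by have := h (Ordinal hn) I; rewrite /= in_itv.
    + by move=> i _; have := h i I; rewrite /= in_itv.
rewrite (hind (fun=> [set` `]-oo, x]])); last by move=> i; exact: measurable_itv.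
under eq_bigr do rewrite hX.
rewrite prodEFin; congr EFin.
rewrite /gumbel_cdf /GA -expR_sum; congr expR.
rewrite mulr_suml -sumrN; apply: eq_bigr => i _.
by rewrite -expRD mulrBl opprB.
Qed.

Lemma sum_gt0 (R : realType) n (hn : (0 < n)%N) (s : R) (mu : 'I_n -> R) :
  0 < \sum_i expR (mu i / s).
Proof.
apply: (lt_le_trans (expR_gt0 (mu (Ordinal hn) / s))).
rewrite (bigD1 (Ordinal hn)) //= lerDl; apply: sumr_ge0 => i _; exact: expR_ge0.
Qed.

Lemma max_density (R : realType) d (T : measurableType d) (P : probability T R) n
  (hn : (0 < n)%N) (s : R) (hs : 0 < s) (mu : 'I_n -> R) (X : 'I_n -> T -> R)
  (hind : mutually_independent P X) (hX : forall i, is_gumbel P (X i) (mu i) s) :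
  is_density P (maxRV hn X) (gA (\sum_i expR (mu i / s)) s).
Proof.
have hA := @sum_gt0 _ _ hn s mu.
split; first exact: measurable_realfun.continuous_measurable_fun (gA_cont _ _).
split; first by move=> t; exact: gA_ge0.
by move=> x; rewrite (@max_cdf _ _ _ _ _ hn _ _ _ hind hX) (gA_int _ _ hA hs).
Qed.

Lemma ratio_eq (R : realType) (A B s x : R) : 0 < B -> 0 < s ->
  gA A s x / gA B s x = (A / B) * expR ((B - A) * expR (- (x / s))).
Proof.
move=> hB hs.
have hg : gA B s x != 0.
  rewrite /gA /GA mulf_neq0 ?gt_eqF ?expR_gt0 //.
  by rewrite divr_gt0 // mulr_gt0 // expR_gt0.
apply: (canLR (mulfK hg)).
rewrite /gA /GA.
have -> : expR (- (A * expR (- (x / s)))) =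
  expR ((B - A) * expR (- (x / s))) * expR (- (B * expR (- (x / s)))).
  by rewrite -expRD; congr expR; ring.
field; rewrite ?gt_eqF //.
Qed.

Lemma ratio_mono (R : realType) (A B s x y : R) : 0 < B -> B <= A -> 0 < s -> x <= y ->
  gA A s x / gA B s x <= gA A s y / gA B s y.
Proof.
move=> hB hBA hs hxy.
rewrite !ratio_eq //.
apply: ler_wpM2l; first by apply: divr_ge0; [exact: (le_trans (ltW hB))|exact: ltW].
rewrite ler_expR; apply: ler_wnM2l; first by rewrite subr_le0.
rewrite ler_expR lerN2; apply: ler_wpM2r => //; rewrite invr_ge0; exact: ltW.
Qed.

Theorem theorem3p1 (R : realType) (d1 d2 : measure_display)
  (T1 : measurableType d1) (T2 : measurableType d2)
  (P1 : probability T1 R) (P2 : probability T2 R)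
  (n : nat) (hn : (0 < n)%N) (sigma : R) (hsigma : 0 < sigma)
  (mu mustar : 'I_n -> R)
  (X : 'I_n -> {RV P1 >-> R}) (Y : 'I_n -> {RV P2 >-> R})
  (hXind : mutually_independent P1 (fun i => X i : T1 -> R))
  (hYind : mutually_independent P2 (fun i => Y i : T2 -> R))
  (hX : forall i, is_gumbel P1 (X i) (mu i) sigma)
  (hY : forall i, is_gumbel P2 (Y i) (mustar i) sigma)
  (hmu : forall i, mustar i <= mu i) :
  lr_le P2 (maxRV hn (fun i => Y i : T2 -> R))
        P1 (maxRV hn (fun i => X i : T1 -> R)).
Proof.
exists (gA (\sum_i expR (mustar i / sigma)) sigma),
       (gA (\sum_i expR (mu i / sigma)) sigma).
split; first exact: max_density.
split; first exact: max_density.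
move=> x y hxy; apply: ratio_mono => //; first exact: sum_gt0.
apply: ler_sum => i _; rewrite ler_expR; apply: ler_wpM2r; last exact: hmu.
by rewrite invr_ge0 ltW.
Qed.
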